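(* Let $(X,Y)$ be distributed according to an $(\alpha,\lambda)$-locally consistent RBM with $\alpha>0$. Then for every observed node $u$, the two-hop Markov neighborhood of $u$ equals $N_2(u)\setminus\{u\}$.
   Context: A Restricted Boltzmann Machine (RBM) with $n$ observed variables $X\in\{\pm1\}^n$ (indexed by $V_{obs}=[n]$) and $m$ latent variables $Y\in\{\pm1\}^m$ (indexed by $V_{lat}=[m]$) is the distribution $\Pr[X=x,Y=y]=\frac1Z\exp(x^TJy+h^Tx+g^Ty)$, where $J\in\mathbb R^{n\times m}$, $h\in\mathbb R^n$, $g\in\mathbb R^m$ are arbitrary and $Z$ is the normalizing constant. Its edge set is $E=\{(i,j):J_{ij}\neq0\}$. The RBM is $(\alpha,\lambda)$-locally consistent if: (i) for each $j\in[m]$, either $J_{ij}\ge0$ for all $i$ or $J_{ij}\le0$ for all $i$; (ii) $|J_{ij}|\ge\alpha$ for every $(i,j)\in E$; (iii) $\sum_j|J_{ij}|+|h_i|\le\lambda$ for all $i\in[n]$; (iv) $\sum_i|J_{ij}|+|g_j|\le\lambda$ for all $j\in[m]$. $N_2(u)=\{i\in V_{obs}:\exists j\in[m],\ J_{ij}\ne0,\ J_{uj}\neq0\}$. The two-hop Markov neighborhood of $u$ is the smallest set $S\subseteq V_{obs}\setminus\{u\}$ such that, conditioned on $X_S$, $X_u$ is independent of $X_v$ for every $v\in V_{obs}\setminus(S\cup\{u\})$. *)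

(* Defs.v *)
From HB Require Import structures.
From Stdlib Require Import Reals.
From mathcomp Require Import all_boot.

Set Implicit Arguments.
Unset Strict Implicit.
Unset Printing Implicit Defensive.
Local Open Scope R_scope.

Lemma Rplus_assoc' : associative Rplus.
Proof. move=> a b c; symmetry; exact: Rplus_assoc. Qed.
HB.instance Definition _ :=
  Monoid.isComLaw.Build R 0 Rplus Rplus_assoc' Rplus_comm Rplus_0_l.


Definition spin (b : bool) : R := if b then 1 else (-1).

Definition nzb (r : R) : bool := if Req_EM_T r 0 then false else true.

Section RBM.
Variables (n m : nat) (J : 'I_n -> 'I_m -> R) (h : 'I_n -> R) (g : 'I_m -> R).

Definition obs := {ffun 'I_n -> bool}.
Definition lat := {ffun 'I_m -> bool}.

Definition rbm_weight (x : obs) (y : lat) : R :=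
  exp (\big[Rplus/0]_(i < n) \big[Rplus/0]_(j < m)
          (spin (x i) * J i j * spin (y j))
       + \big[Rplus/0]_(i < n) (h i * spin (x i))
       + \big[Rplus/0]_(j < m) (g j * spin (y j))).

Definition rbm_Z : R :=
  \big[Rplus/0]_(x : obs) \big[Rplus/0]_(y : lat) rbm_weight x y.

Definition rbm_prob (x : obs) (y : lat) : R := (rbm_weight x y / rbm_Z).

Definition probX (E : pred obs) : R :=
  \big[Rplus/0]_(x : obs | E x) \big[Rplus/0]_(y : lat) rbm_prob x y.

Definition agree (S : {set 'I_n}) (s : obs) : pred obs :=
  fun x => [forall i in S, x i == s i].

Definition cond_indep (u v : 'I_n) (S : {set 'I_n}) : Prop :=
  forall (a b : bool) (s : obs),
    (probX (fun x => [&& x u == a, x v == b & agree S s x]) * probX (agree S s))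
    = (probX (fun x => (x u == a) && agree S s x)
       * probX (fun x => (x v == b) && agree S s x)).

Definition markov_blanket_prop (u : 'I_n) (S : {set 'I_n}) : Prop :=
  u \notin S /\
  forall v : 'I_n, v != u -> v \notin S -> cond_indep u v S.

Definition is_two_hop_markov_nbhd (u : 'I_n) (S : {set 'I_n}) : Prop :=
  markov_blanket_prop u S /\
  forall S' : {set 'I_n}, markov_blanket_prop u S' -> S \subset S'.

Definition N2 (u : 'I_n) : {set 'I_n} :=
  [set i | [exists j : 'I_m, nzb (J i j) && nzb (J u j)]].

Definition locally_consistent (alpha lambda : R) : Prop :=
  (forall j : 'I_m, (forall i, 0 <= J i j) \/ (forall i, J i j <= 0)) /\
  (forall i j, J i j <> 0 -> (alpha <= Rabs (J i j))) /\
  (forall i : 'I_n,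
     (\big[Rplus/0]_(j < m) Rabs (J i j) + Rabs (h i) <= lambda)) /\
  (forall j : 'I_m,
     (\big[Rplus/0]_(i < n) Rabs (J i j) + Rabs (g j) <= lambda)).

End RBM.

(* Main.v *)
Require Import Defs.
From HB Require Import structures.
From Stdlib Require Import Reals Lra.
From mathcomp Require Import all_boot.
Set Implicit Arguments.
Unset Strict Implicit.
Unset Printing Implicit Defensive.
Local Open Scope R_scope.


Lemma sumR_ge0 (I : finType) (P : pred I) (F : I -> R) :
  (forall i, P i -> 0 <= F i) -> 0 <= \big[Rplus/0]_(i | P i) F i.
Proof. move=> H; apply: (big_ind (fun x => 0 <= x)) => //; [lra| move=> *; lra]. Qed.

Lemma sumR_le (I : finType) (P : pred I) (F G : I -> R) :
  (forall i, P i -> F i <= G i) ->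
  \big[Rplus/0]_(i | P i) F i <= \big[Rplus/0]_(i | P i) G i.
Proof. move=> H; apply: (big_ind2 (fun x y => x <= y)) => //; [lra| move=> *; lra]. Qed.

Lemma sumR_lt (I : finType) (P : pred I) (F G : I -> R) i0 :
  (forall i, P i -> F i <= G i) -> P i0 -> F i0 < G i0 ->
  \big[Rplus/0]_(i | P i) F i < \big[Rplus/0]_(i | P i) G i.
Proof.
move=> H Pi0 Hi0; rewrite (bigD1 i0) //= [X in _ < X](bigD1 i0) //=.
have := sumR_le (P := fun i => P i && (i != i0)) (F:=F) (G:=G).
move=> /(_ (fun i Pi => H i (proj1 (andP Pi)))) ?; lra.
Qed.

Lemma sumR_gt0 (I : finType) (P : pred I) (F : I -> R) i0 :
  (forall i, P i -> 0 < F i) -> P i0 -> 0 < \big[Rplus/0]_(i | P i) F i.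
Proof.
move=> H Pi0; have := sumR_lt (F := fun _ => 0) (G := F) (P:=P) (i0:=i0).
rewrite big1 //; apply => //; last exact: H.
move=> i Pi; apply: Rlt_le; exact: H.
Qed.

Lemma sumR_mull (I : finType) (P : pred I) (F : I -> R) a :
  a * \big[Rplus/0]_(i | P i) F i = \big[Rplus/0]_(i | P i) (a * F i).
Proof.
rewrite (big_endo (fun x => a * x)) //; [move=> x y; ring | ring].
Qed.

Lemma sumR_mulr (I : finType) (P : pred I) (F : I -> R) a :
  \big[Rplus/0]_(i | P i) F i * a = \big[Rplus/0]_(i | P i) (F i * a).
Proof.
rewrite Rmult_comm sumR_mull; apply: eq_bigr => i _; ring.
Qed.

Lemma sumR_add (I : finType) (P : pred I) (F G : I -> R) :
  \big[Rplus/0]_(i | P i) (F i + G i) =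
  \big[Rplus/0]_(i | P i) F i + \big[Rplus/0]_(i | P i) G i.
Proof. exact: big_split. Qed.

Section FKG.
Variable T : finType.
Definition cfg := {ffun T -> bool}.
Definition upd (c : cfg) (k : T) (b : bool) : cfg :=
  [ffun k' => if k' == k then b else c k'].
Definition leC (c d : cfg) := forall k, c k ==> d k.
Definition incr (f : cfg -> R) := forall c d, leC c d -> f c <= f d.
Definition lsm (mu : cfg -> R) := forall c d,
  mu c * mu d <= mu [ffun k => c k || d k] * mu [ffun k => c k && d k].
Definition agreeOut (A : {set T}) (z c : cfg) : bool :=
  [forall k, (k \notin A) ==> (c k == z k)].

Lemma updE c k b k' : upd c k b k' = if k' == k then b else c k'.
Proof. by rewrite ffunE. Qed.

Lemma decomp (A : {set T}) k z (F : cfg -> R) : k \notin A ->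
  \big[Rplus/0]_(c | agreeOut (k |: A) z c) F c =
  \big[Rplus/0]_(c | agreeOut A z c) F (upd c k true) +
  \big[Rplus/0]_(c | agreeOut A z c) F (upd c k false).
Proof.
move=> kA; rewrite (bigID (fun c : cfg => c k) (fun c => agreeOut (k |: A) z c)) /=.
have H : forall b, \big[Rplus/0]_(c | agreeOut (k |: A) z c && (c k == b)) F c =
   \big[Rplus/0]_(c | agreeOut A z c) F (upd c k b).
  move=> b.
  rewrite (reindex_onto (fun c => upd c k b) (fun c => upd c k (z k))).
    apply: eq_bigl => c; apply/idP/idP.
      case/andP=> /andP [/forallP H1 _] /eqP H2; apply/forallP => k'.
      apply/implyP => k'A; have := H1 k'; rewrite in_setU1 negb_or k'A andbT.
      have := congr1 (fun f : cfg => f k') H2; rewrite !updE.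
      case: (k' =P k) => [->|_] /=.
        by move=> -> _.
      by [].
    move/forallP=> H1; apply/andP; split; [apply/andP; split|].
    - apply/forallP=> k'; apply/implyP; rewrite in_setU1 negb_or => /andP[k'k k'A].
      by rewrite updE (negbTE k'k) (implyP (H1 k')).
    - by rewrite updE eqxx.
    - apply/eqP/ffunP => k'; rewrite !updE; case: (k' =P k) => [->|//].
      by rewrite (eqP (implyP (H1 k) kA)).
  move=> c /andP [/forallP H1 /eqP H2]; apply/ffunP => k'; rewrite !updE.
  by case: (k' =P k) => [->|//].
rewrite -(H true) -(H false); congr (_ + _); apply: eq_bigl => c.
  by rewrite eqb_id.
by rewrite eqbF_neg.
Qed.

Definition Sm (A : {set T}) z (F : cfg -> R) := \big[Rplus/0]_(c | agreeOut A z c) F c.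
Definition posF (mu : cfg -> R) := forall c, 0 < mu c.
Definition FKGp (A : {set T}) := forall z mu f g, posF mu -> lsm mu -> incr f -> incr g ->
  Sm A z (fun c => mu c * f c) * Sm A z (fun c => mu c * g c) <=
  Sm A z (fun c => mu c * f c * g c) * Sm A z mu.

Lemma agreeOut_refl A z : agreeOut A z z.
Proof. by apply/forallP => k; apply/implyP. Qed.

Lemma Sm_gt0 A z mu : posF mu -> 0 < Sm A z mu.
Proof. move=> H; apply: (sumR_gt0 (i0 := z)) => //; exact: agreeOut_refl. Qed.

Lemma Sm_ge0 A z F : (forall c, 0 <= F c) -> 0 <= Sm A z F.
Proof. move=> H; exact: sumR_ge0. Qed.

Lemma Sm_le A z F G : (forall c, F c <= G c) -> Sm A z F <= Sm A z G.
Proof. move=> H; exact: sumR_le. Qed.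

Lemma Sm_lt A z F G : (forall c, F c < G c) -> Sm A z F < Sm A z G.
Proof.
move=> H; apply: (sumR_lt (i0 := z)); last exact: H.
  by move=> i _; apply: Rlt_le.
exact: agreeOut_refl.
Qed.

Lemma Sm_ext A z F G : (forall c, F c = G c) -> Sm A z F = Sm A z G.
Proof. move=> H; apply: eq_bigr => c _; exact: H. Qed.

Lemma lsm_upd mu k b : lsm mu -> lsm (fun c => mu (upd c k b)).
Proof.
move=> H c d /=.
have -> : upd [ffun k0 => c k0 || d k0] k b = [ffun k0 => upd c k b k0 || upd d k b k0].
  by apply/ffunP => k'; rewrite !ffunE; case: (k' == k); rewrite ?orbb.
have -> : upd [ffun k0 => c k0 && d k0] k b = [ffun k0 => upd c k b k0 && upd d k b k0].
  by apply/ffunP => k'; rewrite !ffunE; case: (k' == k); rewrite ?andbb.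
exact: H.
Qed.

Lemma leC_upd c d k b : leC c d -> leC (upd c k b) (upd d k b).
Proof. by move=> H k'; rewrite !updE; case: (k' == k); [exact: implybb|exact: H]. Qed.

Lemma incr_upd f k b : incr f -> incr (fun c => f (upd c k b)).
Proof. move=> H c d cd; apply: H; exact: leC_upd. Qed.

Lemma upd_le c k : leC (upd c k false) (upd c k true).
Proof. by move=> k'; rewrite !updE; case: (k' == k) => //; exact: implybb. Qed.

Lemma ratio_incr mu k : posF mu -> lsm mu ->
  incr (fun c => mu (upd c k true) / mu (upd c k false)).
Proof.
move=> P L c d cd /=.
have := L (upd c k true) (upd d k false).
have -> : [ffun k0 => upd c k true k0 || upd d k false k0] = upd d k true.
  apply/ffunP => k'; rewrite !ffunE; case: (k' == k) => //.
  by have := cd k'; case: (c k'); case: (d k').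
have -> : [ffun k0 => upd c k true k0 && upd d k false k0] = upd c k false.
  apply/ffunP => k'; rewrite !ffunE; case: (k' == k) => //.
  by have := cd k'; case: (c k'); case: (d k').
move=> H.
have p1 := P (upd c k false); have p2 := P (upd d k false).
apply (Rmult_le_reg_r (mu (upd c k false) * mu (upd d k false))).
  exact: Rmult_lt_0_compat.
have -> : mu (upd c k true) / mu (upd c k false) * (mu (upd c k false) * mu (upd d k false))
  = mu (upd c k true) * mu (upd d k false) by field; lra.
have -> : mu (upd d k true) / mu (upd d k false) * (mu (upd c k false) * mu (upd d k false))
  = mu (upd d k true) * mu (upd c k false) by field; lra.
lra.
Qed.

Section Step.
Variables (A : {set T}) (k : T) (kA : k \notin A) (IH : FKGp A).
Variables (z : cfg) (mu f : cfg -> R) (Pmu : posF mu) (Lmu : lsm mu) (If : incr f).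

Let M b := Sm A z (fun c => mu (upd c k b)).
Let P b := Sm A z (fun c => mu (upd c k b) * f (upd c k b)).
Let Q := Sm A z (fun c => mu (upd c k false) * f (upd c k true)).
Let r c := mu (upd c k true) / mu (upd c k false).

Lemma mono_a : P false * M true <= Q * M true.
Proof.
apply: Rmult_le_compat_r; first by apply: Rlt_le; apply: Sm_gt0 => c; exact: Pmu.
apply: Sm_le => c; apply: Rmult_le_compat_l; first exact: Rlt_le.
apply: If; exact: upd_le.
Qed.

Lemma mono_a_strict : (forall c, f (upd c k false) < f (upd c k true)) ->
  P false * M true < Q * M true.
Proof.
move=> H; apply: Rmult_lt_compat_r; first by apply: Sm_gt0 => c; exact: Pmu.
apply: Sm_lt => c; apply: Rmult_lt_compat_l; first exact: Pmu.
exact: H.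
Qed.

Lemma mono_b_eq :
  Q * M true = Sm A z (fun c => mu (upd c k false) * f (upd c k true)) *
               Sm A z (fun c => mu (upd c k false) * r c) /\
  P true * M false = Sm A z (fun c => mu (upd c k false) * f (upd c k true) * r c) *
               Sm A z (fun c => mu (upd c k false)).
Proof.
have E c : mu (upd c k false) * r c = mu (upd c k true).
  rewrite /r; field; apply: Rgt_not_eq; exact: Pmu.
split; first by rewrite /Q /M; congr (_ * _); apply: Sm_ext => c; rewrite E.
rewrite /P /M; congr (_ * _); apply: Sm_ext => c.
rewrite Rmult_assoc (Rmult_comm (f _)) -Rmult_assoc E //.
Qed.

Lemma mono_b : Q * M true <= P true * M false.
Proof.
case: mono_b_eq => -> ->; apply: IH.
- by move=> c; exact: Pmu.
- exact: lsm_upd.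
- exact: incr_upd.
- exact: ratio_incr.
Qed.

Lemma mono : P false * M true <= P true * M false.
Proof. have := mono_a; have := mono_b; lra. Qed.

End Step.

Lemma combine P0 P1 Q0 Q1 R0 R1 M0 M1 : 0 < M0 -> 0 < M1 ->
  P0 * Q0 <= R0 * M0 -> P1 * Q1 <= R1 * M1 ->
  P0 * M1 <= P1 * M0 -> Q0 * M1 <= Q1 * M0 ->
  (P1 + P0) * (Q1 + Q0) <= (R1 + R0) * (M1 + M0).
Proof.
move=> h0 h1 a b c d.
apply (Rmult_le_reg_r (M0 * M1)); first nra.
have e : 0 <= (P1 * M0 - P0 * M1) * (Q1 * M0 - Q0 * M1).
  apply: Rmult_le_pos; lra.
have a' := Rmult_le_compat_r (M1 * (M1 + M0)) _ _ ltac:(nra) a.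
have b' := Rmult_le_compat_r (M0 * (M1 + M0)) _ _ ltac:(nra) b.
have E : (P1 + P0) * (Q1 + Q0) * (M0 * M1) = P1 * Q1 * (M0 * (M1 + M0)) + P0 * Q0 * (M1 * (M1 + M0)) - (P1 * M0 - P0 * M1) * (Q1 * M0 - Q0 * M1) by ring.
have E2 : (R1 + R0) * (M1 + M0) * (M0 * M1) = R1 * M1 * (M0 * (M1 + M0)) + R0 * M0 * (M1 * (M1 + M0)) by ring.
rewrite E E2; lra.
Qed.

Lemma combine_strict P0 P1 Q0 Q1 R0 R1 M0 M1 : 0 < M0 -> 0 < M1 ->
  P0 * Q0 <= R0 * M0 -> P1 * Q1 <= R1 * M1 ->
  P0 * M1 < P1 * M0 -> Q0 * M1 < Q1 * M0 ->
  (P1 + P0) * (Q1 + Q0) < (R1 + R0) * (M1 + M0).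
Proof.
move=> h0 h1 a b c d.
apply (Rmult_lt_reg_r (M0 * M1)); first nra.
have e : 0 < (P1 * M0 - P0 * M1) * (Q1 * M0 - Q0 * M1).
  apply: Rmult_lt_0_compat; lra.
have a' := Rmult_le_compat_r (M1 * (M1 + M0)) _ _ ltac:(nra) a.
have b' := Rmult_le_compat_r (M0 * (M1 + M0)) _ _ ltac:(nra) b.
have E : (P1 + P0) * (Q1 + Q0) * (M0 * M1) = P1 * Q1 * (M0 * (M1 + M0)) + P0 * Q0 * (M1 * (M1 + M0)) - (P1 * M0 - P0 * M1) * (Q1 * M0 - Q0 * M1) by ring.
have E2 : (R1 + R0) * (M1 + M0) * (M0 * M1) = R1 * M1 * (M0 * (M1 + M0)) + R0 * M0 * (M1 * (M1 + M0)) by ring.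
rewrite E E2; lra.
Qed.

Definition FKGs (A : {set T}) (z : cfg) (mu f g : cfg -> R) :=
  Sm A z (fun c => mu c * f c) * Sm A z (fun c => mu c * g c) <
  Sm A z (fun c => mu c * f c * g c) * Sm A z mu.
Definition Mono (A : {set T}) (k : T) (z : cfg) (mu f : cfg -> R) :=
  Sm A z (fun c => mu (upd c k false) * f (upd c k false)) * Sm A z (fun c => mu (upd c k true))
  < Sm A z (fun c => mu (upd c k true) * f (upd c k true)) * Sm A z (fun c => mu (upd c k false)).
End FKG.

Section FKG2.
Variable T : finType.
Implicit Types (A : {set T}) (k : T) (z : cfg T) (mu f g : cfg T -> R).
Lemma mono_pt (A : {set T}) (k : T) (z : cfg T) (mu f : cfg T -> R) : k \notin A -> FKGp A -> posF mu -> lsm mu -> incr f ->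
  (forall c, f (upd c k false) < f (upd c k true)) -> Mono A k z mu f.
Proof.
move=> kA IH Pm Lm If H; rewrite /Mono.
have := mono_a_strict A z Pm H; have := mono_b k IH z Pm Lm If; cbv beta; lra.
Qed.

Lemma mono_fkg (A : {set T}) (k : T) (z : cfg T) (mu f : cfg T -> R) : k \notin A -> FKGp A -> posF mu -> lsm mu -> incr f ->
  FKGs A z (fun c => mu (upd c k false)) (fun c => f (upd c k true))
     (fun c => mu (upd c k true) / mu (upd c k false)) -> Mono A k z mu f.
Proof.
move=> kA IH Pm Lm If H; rewrite /Mono.
have := mono_a A k z Pm If; have [E1 E2] := mono_b_eq A k z f Pm.
move: H; rewrite /FKGs; cbv beta in E1, E2 |- *; rewrite -E1 -E2; lra.
Qed.

Lemma FKG_step (A : {set T}) (k : T) : k \notin A -> FKGp A -> FKGp (k |: A).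
Proof.
move=> kA IH z mu f g Pm Lm If Ig; rewrite /Sm !decomp //.
apply: combine.
- exact: (Sm_gt0 A z (fun c => Pm (upd c k false))).
- exact: (Sm_gt0 A z (fun c => Pm (upd c k true))).
- apply: (IH z (fun c => mu (upd c k false))) => //; [exact: lsm_upd|exact: incr_upd|exact: incr_upd].
- apply: (IH z (fun c => mu (upd c k true))) => //; [exact: lsm_upd|exact: incr_upd|exact: incr_upd].
- exact: (mono k IH z Pm Lm If).
- exact: (mono k IH z Pm Lm Ig).
Qed.

Lemma FKG_strict_step (A : {set T}) (k : T) (z : cfg T) (mu f g : cfg T -> R) : k \notin A -> FKGp A -> posF mu -> lsm mu ->
  incr f -> incr g -> Mono A k z mu f -> Mono A k z mu g -> FKGs (k |: A) z mu f g.
Proof.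
move=> kA IH Pm Lm If Ig Hf Hg; rewrite /FKGs /Sm !decomp //.
apply: combine_strict.
- exact: (Sm_gt0 A z (fun c => Pm (upd c k false))).
- exact: (Sm_gt0 A z (fun c => Pm (upd c k true))).
- apply: (IH z (fun c => mu (upd c k false))) => //; [exact: lsm_upd|exact: incr_upd|exact: incr_upd].
- apply: (IH z (fun c => mu (upd c k true))) => //; [exact: lsm_upd|exact: incr_upd|exact: incr_upd].
- exact: Hf.
- exact: Hg.
Qed.

Lemma FKG_all (A : {set T}) : FKGp A.
Proof.
move: {2}#|A| (erefl #|A|) => N; elim: N A => [|N IHN] A HA.
  have -> : A = set0 by apply/eqP; rewrite -cards_eq0 HA.
  move=> z mu f g _ _ _ _.
  have E F : Sm set0 z F = F z.
    rewrite /Sm (big_pred1 z) // => c; apply/forallP/eqP => [H|->].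
      apply/ffunP => k; have := implyP (H k); rewrite in_set0 => /(_ isT) /eqP //.
    by move=> k; apply/implyP.
  rewrite !E; apply: Req_le; ring.
have : (0 < #|A|)%N by rewrite HA.
case/card_gt0P => k kA.
rewrite -(setD1K kA); apply: FKG_step; first by rewrite in_setD1 eqxx.
apply: IHN; move: HA; rewrite (cardsD1 k A) kA => /eqP; rewrite eqSS => /eqP //.
Qed.
End FKG2.

Lemma sumR_opp (I : finType) (P : pred I) (F : I -> R) :
  Ropp (\big[Rplus/0]_(i | P i) F i) = \big[Rplus/0]_(i | P i) (- F i).
Proof. rewrite (big_endo (fun x => - x)) //; [move=> x y; ring | ring]. Qed.

Lemma spin_join a b a' b' :
  spin a * spin a' + spin b * spin b' <=
  spin (a || b) * spin (a' || b') + spin (a && b) * spin (a' && b').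
Proof. case: a; case: b; case: a'; case: b'; rewrite /spin /=; lra. Qed.

Lemma spin_join1 a b : spin (a || b) + spin (a && b) = spin a + spin b.
Proof. case: a; case: b; rewrite /spin /=; lra. Qed.

Section Ising.
Variables (n m : nat) (J : 'I_n -> 'I_m -> R) (h : 'I_n -> R) (g : 'I_m -> R).
Hypothesis Hsign : forall j, (forall i, 0 <= J i j) \/ (forall i, J i j <= 0).

Definition Tk := ('I_n + 'I_m)%type.
Definition neg (j : 'I_m) : bool :=
  [exists i : 'I_n, if Rlt_dec (J i j) 0 then true else false].
Definition eps j := if neg j then -1 else 1.
Definition Jp i j := J i j * eps j.

Lemma Jp_ge0 i j : 0 <= Jp i j.
Proof.
rewrite /Jp /eps /neg; case: existsP => [[i0]|H].
  case: Rlt_dec => // lt _; case: (Hsign j) => H; first by have := H i0; lra.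
  have := H i; lra.
have : ~ (J i j < 0) by move=> lt; apply: H; exists i; case: Rlt_dec.
lra.
Qed.

Lemma Jp_gt0 i j : J i j <> 0 -> 0 < Jp i j.
Proof.
move=> nz; have := Jp_ge0 i j; rewrite /Jp /eps; case: (neg j) => H.
  have : J i j * -1 <> 0 by move=> E; apply: nz; lra.
  lra.
have : J i j * 1 <> 0 by move=> E; apply: nz; lra.
lra.
Qed.

Definition Phi (c : cfg Tk) : obs n * lat m :=
  ([ffun i => c (inl i)], [ffun j => addb (c (inr j)) (neg j)]).
Definition Psi (p : obs n * lat m) : cfg Tk :=
  [ffun k => match k with inl i => p.1 i | inr j => addb (p.2 j) (neg j) end].

Lemma PhiK : cancel Phi Psi.
Proof.
move=> c; apply/ffunP => [[i|j]]; rewrite !ffunE //=.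
by rewrite addbK.
Qed.

Lemma PsiK : cancel Psi Phi.
Proof.
move=> [x y]; rewrite /Phi; congr (_, _); apply/ffunP => i; rewrite !ffunE //=.
by rewrite addbK.
Qed.

Definition Ec (c : cfg Tk) : R :=
  \big[Rplus/0]_(i < n) \big[Rplus/0]_(j < m)
     (Jp i j * spin (c (inl i)) * spin (c (inr j)))
  + \big[Rplus/0]_(i < n) (h i * spin (c (inl i)))
  + \big[Rplus/0]_(j < m) (g j * eps j * spin (c (inr j))).

Lemma spin_xor b j : spin (addb b (neg j)) = eps j * spin b.
Proof. rewrite /eps; case: (neg j); case: b; rewrite /spin /=; lra. Qed.

Lemma weight_Phi c : rbm_weight J h g (Phi c).1 (Phi c).2 = exp (Ec c).
Proof.
rewrite /rbm_weight /Ec; congr (exp (_ + _ + _)).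
- apply: eq_bigr => i _; apply: eq_bigr => j _; rewrite /= !ffunE spin_xor /Jp; ring.
- by apply: eq_bigr => i _; rewrite ffunE.
- apply: eq_bigr => j _; rewrite /= ffunE spin_xor; ring.
Qed.

Definition Dsp (c d : cfg Tk) (i : 'I_n) (j : 'I_m) : R :=
  spin (c (inl i) || d (inl i)) * spin (c (inr j) || d (inr j)) +
  spin (c (inl i) && d (inl i)) * spin (c (inr j) && d (inr j)) -
  (spin (c (inl i)) * spin (c (inr j)) + spin (d (inl i)) * spin (d (inr j))).

Lemma Ec_diff (c d : cfg Tk) :
  Ec [ffun k => c k || d k] + Ec [ffun k => c k && d k] - (Ec c + Ec d) =
  \big[Rplus/0]_(i < n) \big[Rplus/0]_(j < m) (Jp i j * Dsp c d i j).
Proof.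
rewrite /Ec.
have EH : \big[Rplus/0]_(i < n) (h i * spin ([ffun k => c k || d k] (inl i)))
   + \big[Rplus/0]_(i < n) (h i * spin ([ffun k => c k && d k] (inl i)))
   = \big[Rplus/0]_(i < n) (h i * spin (c (inl i))) + \big[Rplus/0]_(i < n) (h i * spin (d (inl i))).
  rewrite -!big_split; apply: eq_bigr => i _; rewrite !ffunE.
  by rewrite /=; rewrite -!Rmult_plus_distr_l spin_join1.
have EG : \big[Rplus/0]_(j < m) (g j * eps j * spin ([ffun k => c k || d k] (inr j)))
   + \big[Rplus/0]_(j < m) (g j * eps j * spin ([ffun k => c k && d k] (inr j)))
   = \big[Rplus/0]_(j < m) (g j * eps j * spin (c (inr j))) + \big[Rplus/0]_(j < m) (g j * eps j * spin (d (inr j))).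
  rewrite -!big_split; apply: eq_bigr => j _; rewrite !ffunE.
  by rewrite /=; rewrite -!Rmult_plus_distr_l spin_join1.
have EJ : \big[Rplus/0]_(i < n) \big[Rplus/0]_(j < m)
     (Jp i j * spin ([ffun k => c k || d k] (inl i)) * spin ([ffun k => c k || d k] (inr j))) +
   \big[Rplus/0]_(i < n) \big[Rplus/0]_(j < m)
     (Jp i j * spin ([ffun k => c k && d k] (inl i)) * spin ([ffun k => c k && d k] (inr j))) -
   (\big[Rplus/0]_(i < n) \big[Rplus/0]_(j < m) (Jp i j * spin (c (inl i)) * spin (c (inr j))) +
    \big[Rplus/0]_(i < n) \big[Rplus/0]_(j < m) (Jp i j * spin (d (inl i)) * spin (d (inr j)))) =
   \big[Rplus/0]_(i < n) \big[Rplus/0]_(j < m) (Jp i j * Dsp c d i j).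
  have -> : forall a1 b1 c1 d1 : R, a1 + b1 - (c1 + d1) = a1 + b1 + (- c1 + - d1) by move=> *; ring.
  rewrite !sumR_opp.
  rewrite -!big_split.
  apply: eq_bigr => i0 _.
  rewrite !sumR_opp -!big_split; apply: eq_bigr => j0 _.
  rewrite /Dsp !ffunE /=; ring.
rewrite -EJ; lra.
Qed.

Lemma Dsp_ge0 (c d : cfg Tk) i j : 0 <= Dsp c d i j.
Proof. rewrite /Dsp; have := spin_join (c (inl i)) (d (inl i)) (c (inr j)) (d (inr j)); lra. Qed.

Lemma Ec_sm (c d : cfg Tk) : Ec c + Ec d <= Ec [ffun k => c k || d k] + Ec [ffun k => c k && d k].
Proof.
suff : 0 <= Ec [ffun k => c k || d k] + Ec [ffun k => c k && d k] - (Ec c + Ec d) by lra.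
rewrite Ec_diff; apply: sumR_ge0 => i _; apply: sumR_ge0 => j _.
apply: Rmult_le_pos; [exact: Jp_ge0 | exact: Dsp_ge0].
Qed.

Lemma Ec_sm_strict (c d : cfg Tk) i0 j0 : J i0 j0 <> 0 ->
  c (inl i0) = true -> d (inl i0) = false -> c (inr j0) = false -> d (inr j0) = true ->
  Ec c + Ec d < Ec [ffun k => c k || d k] + Ec [ffun k => c k && d k].
Proof.
move=> nz c1 d1 c2 d2.
suff : 0 < Ec [ffun k => c k || d k] + Ec [ffun k => c k && d k] - (Ec c + Ec d) by lra.
rewrite Ec_diff.
have H0 : forall (I : finType) (P : pred I) (F : I -> R) i, (forall i, 0 <= F i) -> 0 < F i ->
   0 < \big[Rplus/0]_(i' : I) F i'.
  move=> I P F i Hge Hgt; have := sumR_lt (P := predT) (F := fun _ => 0) (G := F) (i0 := i).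
  rewrite big1 //; apply => //.
apply: (H0 _ predT _ i0).
  move=> i; apply: sumR_ge0 => j _; apply: Rmult_le_pos; [exact: Jp_ge0 | exact: Dsp_ge0].
apply: (H0 _ predT _ j0).
  move=> j; apply: Rmult_le_pos; [exact: Jp_ge0 | exact: Dsp_ge0].
apply: Rmult_lt_0_compat; first exact: Jp_gt0.
rewrite /Dsp c1 d1 c2 d2 /spin /=; lra.
Qed.

End Ising.

Lemma exp_le a b : a <= b -> exp a <= exp b.
Proof. case => [H|->]; [apply: Rlt_le; exact: exp_increasing | lra]. Qed.

Lemma upd_comm (T : finType) (c : cfg T) k1 k2 b1 b2 : k1 != k2 ->
  upd (upd c k1 b1) k2 b2 = upd (upd c k2 b2) k1 b1.
Proof.
move=> ne; apply/ffunP => k; rewrite !updE.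
case: (k =P k1) => [->|_]; case: (k =P k2) => // _.
  by rewrite (negbTE ne). by rewrite (negbTE ne).
Qed.

Section Ising2.
Variables (n m : nat) (J : 'I_n -> 'I_m -> R) (h : 'I_n -> R) (g : 'I_m -> R).
Hypothesis Hsign : forall j, (forall i, 0 <= J i j) \/ (forall i, J i j <= 0).

Lemma Z_gt0 : 0 < rbm_Z J h g.
Proof.
rewrite /rbm_Z; apply: (sumR_gt0 (i0 := [ffun => true])) => // x _.
apply: (sumR_gt0 (i0 := [ffun => true])) => // y _; exact: exp_pos.
Qed.

Definition mu (c : cfg (Tk n m)) : R :=
  rbm_prob J h g (Phi J c).1 (Phi J c).2.

Lemma mu_exp c : mu c = exp (Ec J h g c) / rbm_Z J h g.
Proof. by rewrite /mu /rbm_prob weight_Phi. Qed.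

Lemma pos_mu : posF mu.
Proof. move=> c; rewrite mu_exp; apply: Rdiv_lt_0_compat; [exact: exp_pos| exact: Z_gt0]. Qed.

Lemma lsm_mu : lsm mu.
Proof.
move=> c d; rewrite !mu_exp.
have Z0 := Z_gt0.
have E : forall a b, exp a / rbm_Z J h g * (exp b / rbm_Z J h g) =
   exp (a + b) / (rbm_Z J h g * rbm_Z J h g).
  move=> a b; rewrite exp_plus; field; lra.
rewrite !E; apply: Rmult_le_compat_r.
  apply: Rlt_le; apply: Rinv_0_lt_compat; nra.
apply: exp_le; exact: Ec_sm.
Qed.

Lemma lsm_mu_strict (c d : cfg (Tk n m)) i0 j0 : J i0 j0 <> 0 ->
  c (inl i0) = true -> d (inl i0) = false -> c (inr j0) = false -> d (inr j0) = true ->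
  mu c * mu d < mu [ffun k => c k || d k] * mu [ffun k => c k && d k].
Proof.
move=> nz c1 d1 c2 d2; rewrite !mu_exp.
have Z0 := Z_gt0.
have E : forall a b, exp a / rbm_Z J h g * (exp b / rbm_Z J h g) =
   exp (a + b) / (rbm_Z J h g * rbm_Z J h g).
  move=> a b; rewrite exp_plus; field; lra.
rewrite !E; apply: Rmult_lt_compat_r.
  apply: Rinv_0_lt_compat; nra.
apply: exp_increasing; exact: (Ec_sm_strict h g Hsign nz c1 d1 c2 d2).
Qed.

Lemma ratio_strict (c : cfg (Tk n m)) i j : J i j <> 0 ->
  mu (upd (upd c (inr j) false) (inl i) true) / mu (upd (upd c (inr j) false) (inl i) false) <
  mu (upd (upd c (inr j) true) (inl i) true) / mu (upd (upd c (inr j) true) (inl i) false).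
Proof.
move=> nz.
have := lsm_mu_strict (c := upd (upd c (inr j) false) (inl i) true)
                      (d := upd (upd c (inr j) true) (inl i) false) nz.
rewrite !updE !eqxx /= => /(_ erefl erefl erefl erefl).
have -> : [ffun k => upd (upd c (inr j) false) (inl i) true k ||
                     upd (upd c (inr j) true) (inl i) false k]
          = upd (upd c (inr j) true) (inl i) true.
  apply/ffunP => k; rewrite !ffunE; case: (k == inl i) => //.
  by case: (k == inr j); rewrite ?orbb.
have -> : [ffun k => upd (upd c (inr j) false) (inl i) true k &&
                     upd (upd c (inr j) true) (inl i) false k]
          = upd (upd c (inr j) false) (inl i) false.
  apply/ffunP => k; rewrite !ffunE; case: (k == inl i) => //.
  by case: (k == inr j); rewrite ?andbb.
set a := mu (upd (upd c (inr j) false) (inl i) true).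
set b := mu (upd (upd c (inr j) true) (inl i) false).
set a' := mu (upd (upd c (inr j) true) (inl i) true).
set b' := mu (upd (upd c (inr j) false) (inl i) false).
move=> H.
have pb := pos_mu (upd (upd c (inr j) true) (inl i) false).
have pb' := pos_mu (upd (upd c (inr j) false) (inl i) false).
rewrite -/b -/b' in pb pb'.
apply (Rmult_lt_reg_r (b * b')); first exact: Rmult_lt_0_compat.
have -> : a / b' * (b * b') = a * b by field; lra.
have -> : a' / b * (b * b') = a' * b' by field; lra.
exact: H.
Qed.

End Ising2.

Section Chain.
Variables (n m : nat) (J : 'I_n -> 'I_m -> R) (h : 'I_n -> R) (g : 'I_m -> R).
Hypothesis Hsign : forall j, (forall i, 0 <= J i j) \/ (forall i, J i j <= 0).

Definition Aset (S : {set 'I_n}) : {set Tk n m} :=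
  [set k : Tk n m | match k with inl i => i \notin S | inr _ => true end].

Lemma incr_spin (k : Tk n m) : incr (fun c : cfg (Tk n m) => spin (c k)).
Proof.
move=> c d cd; have := cd k; case: (c k); case: (d k) => //= _; rewrite /spin; lra.
Qed.

Lemma chain (S : {set 'I_n}) (z : cfg (Tk n m)) u v j0 :
  u \notin S -> v \notin S -> u != v -> J u j0 <> 0 -> J v j0 <> 0 ->
  FKGs (Aset S) z (mu J h g) (fun c => spin (c (inl u))) (fun c => spin (c (inl v))).
Proof.
move=> uS vS uv nzu nzv.
set ku : Tk n m := inl u; set kv : Tk n m := inl v; set kj : Tk n m := inr j0.
have kuv : ku != kv by rewrite /ku /kv; apply/eqP => [[E]]; rewrite E eqxx in uv.
have kuj : ku != kj by [].
have kvj : kv != kj by [].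
have kuA : ku \in Aset S by rewrite inE.
have kvA1 : kv \in Aset S :\ ku by rewrite in_setD1 eq_sym kuv inE.
have kjA2 : kj \in Aset S :\ ku :\ kv by rewrite !in_setD1 !inE.
have Pm := pos_mu J h g.
have Lm : lsm (mu J h g) := lsm_mu h g Hsign.
have Pm0 : posF (fun c => mu J h g (upd c ku false)) by move=> c; exact: Pm.
have Lm0 : lsm (fun c => mu J h g (upd c ku false)) by exact: lsm_upd.
rewrite -(setD1K kuA); apply: FKG_strict_step => //.
- by rewrite in_setD1 eqxx.
- exact: FKG_all.
- exact: incr_spin.
- exact: incr_spin.
- apply: mono_pt => //; [by rewrite in_setD1 eqxx | exact: FKG_all | exact: incr_spin |].
  by move=> c; rewrite !updE eqxx /spin; lra.
apply: mono_fkg => //; [by rewrite in_setD1 eqxx | exact: FKG_all | exact: incr_spin |].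
rewrite -(setD1K kvA1); apply: FKG_strict_step => //.
- by rewrite in_setD1 eqxx.
- exact: FKG_all.
- apply: (incr_upd (f := fun c : cfg (Tk n m) => spin (c (inl v)))); exact: incr_spin.
- exact: ratio_incr.
- apply: mono_pt => //; [by rewrite in_setD1 eqxx | exact: FKG_all | |].
    apply: (incr_upd (f := fun c : cfg (Tk n m) => spin (c (inl v)))); exact: incr_spin.
  move=> c; rewrite !updE eq_sym (negbTE kuv) eqxx /spin; lra.
apply: mono_fkg => //; [by rewrite in_setD1 eqxx | exact: FKG_all | exact: ratio_incr |].
set mu00 := (fun c : cfg (Tk n m) => mu J h g (upd (upd c kv false) ku false)).
have Pm00 : posF mu00 by move=> c; exact: Pm.
have Lm00 : lsm mu00.
  exact: (lsm_upd (mu := fun c => mu J h g (upd c ku false)) kv false Lm0).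
set F1 := (fun c : cfg (Tk n m) => mu J h g (upd (upd c kv true) ku true) /
    mu J h g (upd (upd c kv true) ku false)).
set F2 := (fun c : cfg (Tk n m) => mu J h g (upd (upd c kv true) ku false) /
    mu J h g (upd (upd c kv false) ku false)).
have I1 : incr F1.
  exact: (incr_upd (f := fun c => mu J h g (upd c ku true) / mu J h g (upd c ku false)) kv true (ratio_incr ku Pm Lm)).
have I2 : incr F2.
  exact: (ratio_incr (mu := fun c => mu J h g (upd c ku false)) kv Pm0 Lm0).
have nA3 : kj \notin Aset S :\ ku :\ kv :\ kj by rewrite in_setD1 eqxx.
have F3 := FKG_all (Aset S :\ ku :\ kv :\ kj).
rewrite -(setD1K kjA2); apply: FKG_strict_step => //.
- apply: mono_pt => //.
  move=> c; rewrite /F1.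
  rewrite !(@upd_comm _ _ kj kv) 1?eq_sym //.
  exact: (ratio_strict h g Hsign (upd c kv true) nzu).
- apply: mono_pt => //.
  move=> c; rewrite /F2.
  rewrite !(@upd_comm _ _ kv ku) //.
  rewrite !(@upd_comm _ _ kj ku) 1?eq_sym //.
  exact: (ratio_strict h g Hsign (upd c ku false) nzv).
all: by rewrite eq_sym.
Qed.
End Chain.

Section Trans.
Variables (n m : nat) (J : 'I_n -> 'I_m -> R) (h : 'I_n -> R) (g : 'I_m -> R).

Definition qx (x : obs n) := \big[Rplus/0]_(y : lat m) rbm_prob J h g x y.

Lemma trans (S : {set 'I_n}) (s : obs n) (F : obs n -> R) :
  Sm (Aset m S) (Psi J (s, [ffun => false])) (fun c => mu J h g c * F (Phi J c).1) =
  \big[Rplus/0]_(x | agree S s x) (qx x * F x).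
Proof.
rewrite /Sm (reindex (Psi J)); last first.
  apply: onW_bij; exists (Phi J); [exact: PsiK | exact: PhiK].
under eq_bigr => p _ do rewrite /mu PsiK.
have -> : \big[Rplus/0]_(p | agreeOut (Aset m S) (Psi J (s, [ffun => false])) (Psi J p))
    (rbm_prob J h g p.1 p.2 * F p.1) =
  \big[Rplus/0]_(p : obs n * lat m | agree S s p.1 && xpredT p.2)
    (rbm_prob J h g p.1 p.2 * F p.1).
  apply: eq_bigl => [[x y]] /=; rewrite andbT.
  apply/idP/idP.
    rewrite /agreeOut; move/forallP => H; apply/forallP => i; apply/implyP => iS.
    have := H (inl i); rewrite inE /= ?negbK iS /= !ffunE /=; by move/eqP ->.
  move/forallP => H; rewrite /agreeOut; apply/forallP => -[i|j]; rewrite inE //=.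
  apply/implyP => iS; have := implyP (H i); rewrite ?negbK in iS; rewrite iS !ffunE /=.
  by move=> /(_ isT) /eqP ->.
rewrite -(pair_big (fun x => agree S s x) xpredT (fun x y => rbm_prob J h g x y * F x)).
apply: eq_bigr => x _; rewrite /qx sumR_mulr //.
Qed.

Variables (u v : 'I_n).
Definition cell (P : pred (obs n)) (H : obs n -> R) (a b : bool) :=
  \big[Rplus/0]_(x | P x && (x u == a) && (x v == b)) H x.

Lemma split4 (P : pred (obs n)) (H : obs n -> R) :
  \big[Rplus/0]_(x | P x) H x =
  cell P H true true + cell P H true false + cell P H false true + cell P H false false.
Proof.
rewrite (bigID (fun x : obs n => x u) P) /=.
rewrite (bigID (fun x : obs n => x v) (fun x => P x && x u)) /=.
rewrite (bigID (fun x : obs n => x v) (fun x => P x && ~~ x u)) /=.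
rewrite /cell; rewrite -!Rplus_assoc; congr (_ + _ + _ + _); apply: eq_bigl => x;
  by case: (x u); case: (x v); rewrite ?andbT ?andbF.
Qed.

Lemma cellK (P : pred (obs n)) (K : obs n -> R) (a b : bool) (k : R) :
  (forall x : obs n, x u = a -> x v = b -> K x = k) ->
  cell P (fun x => qx x * K x) a b = cell P qx a b * k.
Proof.
move=> H; rewrite /cell sumR_mulr; apply: eq_bigr => x /andP [/andP [_ /eqP ha] /eqP hb].
by rewrite (H x ha hb).
Qed.
End Trans.

Lemma cellK' n m (J : 'I_n -> 'I_m -> R) h g (u v : 'I_n) (P : pred (obs n))
  (K : bool -> bool -> R) (a b : bool) :
  cell u v P (fun x => qx J h g x * K (x u) (x v)) a b = cell u v P (qx J h g) a b * K a b.
Proof. by apply: cellK => x -> ->. Qed.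

Section PartB.
Variables (n m : nat) (J : 'I_n -> 'I_m -> R) (h : 'I_n -> R) (g : 'I_m -> R).
Hypothesis Hsign : forall j, (forall i, 0 <= J i j) \/ (forall i, J i j <= 0).

Lemma notCI (S : {set 'I_n}) u v j0 :
  u \notin S -> v \notin S -> u != v -> J u j0 <> 0 -> J v j0 <> 0 ->
  ~ cond_indep J h g u v S.
Proof.
move=> uS vS uv nzu nzv CI.
pose s : obs n := [ffun => true].
pose z := Psi J (s, [ffun => false]).
have H := chain h g Hsign z uS vS uv nzu nzv.
rewrite /FKGs in H.
have E1 : Sm (Aset m S) z (fun c => mu J h g c * spin (c (inl u))) =
   \big[Rplus/0]_(x | agree S s x) (qx J h g x * spin (x u)).
  rewrite -(trans J h g S s (fun x => spin (x u))); apply: Sm_ext => c; by rewrite ffunE.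
have E2 : Sm (Aset m S) z (fun c => mu J h g c * spin (c (inl v))) =
   \big[Rplus/0]_(x | agree S s x) (qx J h g x * spin (x v)).
  rewrite -(trans J h g S s (fun x => spin (x v))); apply: Sm_ext => c; by rewrite ffunE.
have E3 : Sm (Aset m S) z (fun c => mu J h g c * spin (c (inl u)) * spin (c (inl v))) =
   \big[Rplus/0]_(x | agree S s x) (qx J h g x * (spin (x u) * spin (x v))).
  rewrite -(trans J h g S s (fun x => spin (x u) * spin (x v))); apply: Sm_ext => c.
  by rewrite !ffunE Rmult_assoc.
have E4 : Sm (Aset m S) z (mu J h g) =
   \big[Rplus/0]_(x | agree S s x) (qx J h g x * 1).
  rewrite -(trans J h g S s (fun x => 1)); apply: Sm_ext => c; by rewrite Rmult_1_r.
rewrite E1 E2 E3 E4 !(split4 u v) in H.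
set c11 := cell u v (agree S s) (qx J h g) true true.
set c10 := cell u v (agree S s) (qx J h g) true false.
set c01 := cell u v (agree S s) (qx J h g) false true.
set c00 := cell u v (agree S s) (qx J h g) false false.
rewrite !(cellK' J h g u v (agree S s) (fun a b => spin a)) in H.
rewrite !(cellK' J h g u v (agree S s) (fun a b => spin b)) in H.
rewrite !(cellK' J h g u v (agree S s) (fun a b => spin a * spin b)) in H.
rewrite !(cellK' J h g u v (agree S s) (fun a b => 1)) in H.
rewrite -/c11 -/c10 -/c01 -/c00 /spin in H.
have := CI true true s.
have P1 : probX J h g (fun x => [&& x u == true, x v == true & agree S s x]) = c11.
  rewrite /probX /c11 /cell; apply: eq_bigl => x.
  by case: (x u); case: (x v); case: (agree S s x).
have P2 : probX J h g (agree S s) = c11 + c10 + c01 + c00.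
  by rewrite /probX (split4 u v).
have P3 : probX J h g (fun x => (x u == true) && agree S s x) = c11 + c10.
  rewrite /probX (split4 u v) /cell.
  rewrite [X in _ + _ + X + _]big_pred0; last first.
    by move=> x; case: (x u); rewrite ?andbF ?andbT.
  rewrite [X in _ + _ + X]big_pred0; last first.
    by move=> x; case: (x u); rewrite ?andbF ?andbT.
  rewrite /c11 /c10 /cell Rplus_0_r Rplus_0_r; congr (_ + _); apply: eq_bigl => x;
    by case: (x u); case: (x v); case: (agree S s x).
have P4 : probX J h g (fun x => (x v == true) && agree S s x) = c11 + c01.
  rewrite /probX (split4 u v) /cell.
  rewrite [X in _ + X + _ + _]big_pred0; last first.
    by move=> x; case: (x v); rewrite ?andbF ?andbT.
  rewrite [X in _ + X]big_pred0; last first.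
    by move=> x; case: (x v); rewrite ?andbF ?andbT.
  rewrite /c11 /c01 /cell Rplus_0_r Rplus_0_r; congr (_ + _); apply: eq_bigl => x;
    by case: (x u); case: (x v); case: (agree S s x).
rewrite P1 P2 P3 P4 => HCI.
have Id : (c11 * 1 + c10 * 1 + c01 * -1 + c00 * -1) * (c11 * 1 + c10 * -1 + c01 * 1 + c00 * -1)
  = (c11 * (1 * 1) + c10 * (1 * -1) + c01 * (-1 * 1) + c00 * (-1 * -1)) * (c11 * 1 + c10 * 1 + c01 * 1 + c00 * 1)
    - 4 * (c11 * (c11 + c10 + c01 + c00) - (c11 + c10) * (c11 + c01)).
  ring.
move: H; rewrite Id HCI; lra.
Qed.
End PartB.

Lemma nzbP r : nzb r = true <-> r <> 0.
Proof. rewrite /nzb; case: Req_EM_T => //; split => //. Qed.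

Lemma nzbF r : nzb r = false -> r = 0.
Proof. rewrite /nzb; by case: Req_EM_T. Qed.

Section PartA.
Variables (n m : nat) (J : 'I_n -> 'I_m -> R) (h : 'I_n -> R) (g : 'I_m -> R).
Variable u : 'I_n.

Definition setu (x : obs n) (b : bool) : obs n := [ffun i => if i == u then b else x i].
Definition Lu : pred 'I_m := fun j => nzb (J u j).
Definition mix (a b : lat m) : lat m := [ffun j => if Lu j then a j else b j].
Definition Ew (x : obs n) (y : lat m) : R :=
  \big[Rplus/0]_(i < n) \big[Rplus/0]_(j < m) (spin (x i) * J i j * spin (y j))
  + \big[Rplus/0]_(i < n) (h i * spin (x i))
  + \big[Rplus/0]_(j < m) (g j * spin (y j)).

Lemma Ew_swap (x z : obs n) (y y' : lat m) : (forall i, i \in N2 J u :\ u -> x i = z i) ->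
  Ew x y + Ew z y' = Ew (setu x (z u)) (mix y' y) + Ew (setu z (x u)) (mix y y').
Proof.
move=> Hxz.
have E1 : \big[Rplus/0]_(i < n) \big[Rplus/0]_(j < m) (spin (x i) * J i j * spin (y j)) +
          \big[Rplus/0]_(i < n) \big[Rplus/0]_(j < m) (spin (z i) * J i j * spin (y' j)) =
          \big[Rplus/0]_(i < n) \big[Rplus/0]_(j < m) (spin (setu x (z u) i) * J i j * spin (mix y' y j)) +
          \big[Rplus/0]_(i < n) \big[Rplus/0]_(j < m) (spin (setu z (x u) i) * J i j * spin (mix y y' j)).
  rewrite -!big_split; apply: eq_bigr => i _; rewrite -!big_split; apply: eq_bigr => j _ /=.
  rewrite !ffunE.
  case: (i =P u) => [->|iu].
    rewrite /Lu; case E: (nzb (J u j)); first ring.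
    rewrite (nzbF E); ring.
  case: (Req_EM_T (J i j) 0) => [->|nz]; first ring.
  case Lj : (Lu j); last ring.
  have -> : x i = z i.
    apply: Hxz; rewrite !inE; apply/andP; split; first by apply/eqP.
    apply/existsP; exists j; rewrite /Lu in Lj; rewrite Lj andbT; exact/nzbP.
  ring.
have E2 : \big[Rplus/0]_(i < n) (h i * spin (x i)) + \big[Rplus/0]_(i < n) (h i * spin (z i)) =
   \big[Rplus/0]_(i < n) (h i * spin (setu x (z u) i)) + \big[Rplus/0]_(i < n) (h i * spin (setu z (x u) i)).
  rewrite -!big_split; apply: eq_bigr => i _ /=; rewrite !ffunE.
  case: (i =P u) => [->|_]; ring.
have E3 : \big[Rplus/0]_(j < m) (g j * spin (y j)) + \big[Rplus/0]_(j < m) (g j * spin (y' j)) =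
   \big[Rplus/0]_(j < m) (g j * spin (mix y' y j)) + \big[Rplus/0]_(j < m) (g j * spin (mix y y' j)).
  rewrite -!big_split; apply: eq_bigr => j _ /=; rewrite !ffunE.
  case: (Lu j); ring.
rewrite /Ew; lra.
Qed.

Lemma mix_inv : cancel (fun p : lat m * lat m => (mix p.2 p.1, mix p.1 p.2))
                       (fun p : lat m * lat m => (mix p.2 p.1, mix p.1 p.2)).
Proof.
move=> [a b] /=; congr (_, _); apply/ffunP => j; rewrite !ffunE; by case: (Lu j).
Qed.

Lemma swap (x z : obs n) : (forall i, i \in N2 J u :\ u -> x i = z i) ->
  qx J h g x * qx J h g z = qx J h g (setu x (z u)) * qx J h g (setu z (x u)).
Proof.
move=> Hxz; rewrite /qx !sumR_mulr.
under eq_bigr do rewrite sumR_mull.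
under [RHS]eq_bigr do rewrite sumR_mull.
rewrite !pair_big.
rewrite [RHS](reindex (fun p : lat m * lat m => (mix p.2 p.1, mix p.1 p.2))); last first.
  apply: onW_bij; exists (fun p : lat m * lat m => (mix p.2 p.1, mix p.1 p.2)); exact: mix_inv.
apply: eq_bigr => [[y y']] _ /=.
rewrite /rbm_prob.
have EE : forall a b, exp a / rbm_Z J h g * (exp b / rbm_Z J h g) = exp (a + b) / (rbm_Z J h g * rbm_Z J h g).
  move=> a b; rewrite exp_plus; field; have := Z_gt0 J h g; lra.
rewrite /rbm_weight !EE.
have := Ew_swap y y' Hxz; rewrite /Ew => ->; done.
Qed.

Lemma setu_u x b : setu x b u = b.
Proof. by rewrite ffunE eqxx. Qed.
Lemma setu_ne x b i : i != u -> setu x b i = x i.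
Proof. by move=> iu; rewrite ffunE (negbTE iu). Qed.
Lemma setuK x b : setu (setu x b) (x u) = x.
Proof. apply/ffunP => i; rewrite !ffunE; case: (i =P u) => [->|] //. Qed.

Lemma agree_setu (S : {set 'I_n}) s x b : u \notin S -> agree S s (setu x b) = agree S s x.
Proof.
move=> uS; apply/forallP/forallP => H i; apply/implyP => iS; have := implyP (H i) iS.
  rewrite setu_ne //; apply/eqP => E; by rewrite -E iS in uS.
rewrite setu_ne //; apply/eqP => E; by rewrite -E iS in uS.
Qed.

Definition sig (p : obs n * obs n) : obs n * obs n := (setu p.1 (p.2 u), setu p.2 (p.1 u)).
Lemma sigK : cancel sig sig.
Proof. move=> [x z]; rewrite /sig /= !setu_u !setuK //. Qed.

Lemma probX_q (P : pred (obs n)) : probX J h g P = \big[Rplus/0]_(x | P x) qx J h g x.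
Proof. by []. Qed.

Lemma markov v s a b : v != u ->
  (probX J h g (fun x => [&& x u == a, x v == b & agree (N2 J u :\ u) s x]) *
   probX J h g (agree (N2 J u :\ u) s))
  = (probX J h g (fun x => (x u == a) && agree (N2 J u :\ u) s x)
     * probX J h g (fun x => (x v == b) && agree (N2 J u :\ u) s x)).
Proof.
move=> vu; set S := N2 J u :\ u.
have uS : u \notin S by rewrite !inE eqxx.
rewrite [RHS]Rmult_comm !probX_q.
rewrite !sumR_mulr; under eq_bigr do rewrite sumR_mull.
under [RHS]eq_bigr do rewrite sumR_mull.
rewrite !pair_big_dep.
rewrite [RHS](reindex sig); last by apply: onW_bij; exists sig; exact: sigK.
apply: eq_big => [[x z]|[x z]] /=.
  rewrite !agree_setu // setu_u setu_ne //.
  by case: (x u == a); case: (x v == b); case: (agree S s x); case: (agree S s z).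
case/andP => /and3P [_ _ Dx] Dz.
apply: swap => i iS.
by move/forallP: Dx => /(_ i) /implyP /(_ iS) /eqP ->; move/forallP: Dz => /(_ i) /implyP /(_ iS) /eqP ->.
Qed.
End PartA.


Theorem mainTheorem4 (n m : nat) (J : 'I_n -> 'I_m -> R) (h : 'I_n -> R)
    (g : 'I_m -> R) (alpha lambda : R) :
  Rlt 0 alpha ->
  locally_consistent J h g alpha lambda ->
  forall u : 'I_n, is_two_hop_markov_nbhd J h g u (N2 J u :\ u).
Proof.
move=> Ha [Hsign _] u; split.
  split; first by rewrite !inE eqxx.
  move=> v vu _ a b s; exact: markov.
move=> S' [uS' HS']; apply/subsetP => v; rewrite !inE => /andP [vu /existsP [j /andP [nzv nzu]]].
apply/negPn/negP => vS'.
have uv : u != v by rewrite eq_sym.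
exact: (notCI Hsign uS' vS' uv (proj1 (nzbP _) nzu) (proj1 (nzbP _) nzv) (HS' v vu vS')).
Qed.
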